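(* Let $n,k_1,k_2$ be nonnegative integers with $k_1+k_2\le n$ and $\ell=n-k_1-k_2$. If $G\in\mathcal{U}$, then there is a matrix $G'\in\mathcal{V}$ such that the $\mathbb{Z}_4$-codes with generator matrices $G$ and $G'$ are equivalent.
   Context: $\mathbb{Z}_4=\{0,1,2,3\}$ is the ring of integers modulo $4$; a $\mathbb{Z}_4$-code of length $n$ is a submodule of $\mathbb{Z}_4^n$, and two codes are equivalent if one is obtained from the other by permuting coordinates and changing the signs of some coordinates. Order $\mathbb{Z}_4$ by $0<1<2<3$ and order vectors of $\mathbb{Z}_4^m$ lexicographically. Let $M_{m\times n}(R)$ denote the set of $m\times n$ matrices with entries in $R$. For $T\subset M_{m\times n}(\mathbb{Z}_4)$ let $P_{row}(T)$ be the set of matrices in $T$ whose rows $a_1,\dots,a_m$ satisfy $a_i\le a_j$ whenever $i\le j$, and $P_{col}(T)$ the set of matrices in $T$ whose columns $b_1,\dots,b_n$ satisfy $b_i^T\le b_j^T$ whenever $i\le j$. For $(0,1)$-matrices $A$ ($k_1\times k_2$), $D$ ($k_2\times\ell$) and a $\mathbb{Z}_4$-matrix $B$ ($k_1\times\ell$), let $G(A,B,D)=\begin{pmatrix} I_{k_1} & A & B\\ O & 2I_{k_2} & 2D\end{pmatrix}$. Let $\mathcal{S}=\{G(A,B,D)\mid A\in M_{k_1\times k_2}(\{0,1\}),\ B\in M_{k_1\times\ell}(\mathbb{Z}_4),\ D\in M_{k_2\times\ell}(\{0,1\})\}$, $\mathcal{T}=\{G(A,B,D)\in\mathcal{S}\mid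 A\in P_{row}(M_{k_1\times k_2}(\{0,1\}))\}$. Let $\mathcal{B}$ be the set consisting of all $k_1\times\ell$ matrices with entries in $\{0,2\}$ together with all $k_1\times\ell$ $\mathbb{Z}_4$-matrices $B$ such that, for the smallest $i$ for which the $i$-th row of $B$ contains an entry not in $\{0,2\}$, the $i$-th row of $B$ has all entries in $\{0,1,2\}$. Let $\mathcal{U}=\{G(A,B,D)\in\mathcal{T}\mid B\in\mathcal{B}\}$ and $\mathcal{V}=\{G(A,B,D)\in\mathcal{U}\mid \begin{pmatrix}B\\2D\end{pmatrix}\in P_{col}(M_{(k_1+k_2)\times\ell}(\mathbb{Z}_4))\}$. *)

(* Defs.v *)
From HB Require Import structures.
From mathcomp Require Import all_boot all_order all_algebra.
From mathcomp Require Import perm.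
Set Implicit Arguments. Unset Strict Implicit. Unset Printing Implicit Defensive.
Import GRing.Theory.
Local Open Scope ring_scope.

Notation Z4 := 'Z_4.

(* order 0<1<2<3 on Z4 via the underlying natural number *)
Definition z4nat (x : Z4) : nat := nat_of_ord x.

Fixpoint lex_le (s t : seq nat) : bool :=
  match s, t with
  | [::], _ => true
  | _ :: _, [::] => false
  | x :: s', y :: t' => (x < y)%N || ((x == y) && lex_le s' t')
  end.

Definition row_seq m n (M : 'M[Z4]_(m, n)) (i : 'I_m) : seq nat :=
  [seq z4nat (M i j) | j <- enum 'I_n].
Definition col_seq m n (M : 'M[Z4]_(m, n)) (j : 'I_n) : seq nat :=
  [seq z4nat (M i j) | i <- enum 'I_m].

Definition rows_sorted m n (M : 'M[Z4]_(m, n)) : Prop :=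
  forall i j : 'I_m, (i <= j)%N -> lex_le (row_seq M i) (row_seq M j).
Definition cols_sorted m n (M : 'M[Z4]_(m, n)) : Prop :=
  forall i j : 'I_n, (i <= j)%N -> lex_le (col_seq M i) (col_seq M j).

Definition is01 m n (M : 'M[Z4]_(m, n)) : Prop :=
  forall i j, M i j = 0 \/ M i j = 1.

Definition in02 (x : Z4) : bool := (x == 0) || (x == 2).

Definition inB m n (B : 'M[Z4]_(m, n)) : Prop :=
  (forall i j, in02 (B i j)) \/
  (exists i : 'I_m,
      (exists j, ~~ in02 (B i j)) /\
      (forall i' : 'I_m, (i' < i)%N -> forall j, in02 (B i' j)) /\
      (forall j, B i j != 3)).

Definition Gmat k1 k2 l (A : 'M[Z4]_(k1, k2)) (B : 'M[Z4]_(k1, l))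
  (D : 'M[Z4]_(k2, l)) : 'M[Z4]_(k1 + k2, k1 + (k2 + l)) :=
  col_mx (row_mx 1%:M (row_mx A B))
         (row_mx 0 (row_mx (2 *: 1%:M) (2 *: D))).

Definition code m N (G : 'M[Z4]_(m, N)) : {set 'rV[Z4]_N} :=
  [set x : 'rV[Z4]_N | [exists v : 'rV[Z4]_m, x == v *m G]].

Definition equiv_codes N (C1 C2 : {set 'rV[Z4]_N}) : Prop :=
  exists (s : 'S_N) (e : 'I_N -> bool),
    C2 = [set (\row_j ((-1) ^+ e j * x ord0 (s j)) : 'rV[Z4]_N) | x : 'rV[Z4]_N in C1].

Definition inU k1 k2 l (A : 'M[Z4]_(k1, k2)) (B : 'M[Z4]_(k1, l))
  (D : 'M[Z4]_(k2, l)) : Prop :=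
  [/\ is01 A, is01 D, rows_sorted A & inB B].
Definition inV k1 k2 l (A : 'M[Z4]_(k1, k2)) (B : 'M[Z4]_(k1, l))
  (D : 'M[Z4]_(k2, l)) : Prop :=
  inU A B D /\ cols_sorted (col_mx B (2 *: D)).

(* Main.v *)
Require Import Defs.
From mathcomp Require Import all_boot all_order all_algebra.
From mathcomp Require Import perm.
Set Implicit Arguments. Unset Strict Implicit. Unset Printing Implicit Defensive.
Import GRing.Theory.

Lemma lex_refl : reflexive lex_le.
Proof. by elim=> [|x s IH] //=; rewrite eqxx IH orbT. Qed.

Lemma lex_trans : transitive lex_le.
Proof.
move=> t s u; elim: s t u => [|x s IH] [|y t] [|z u] //=.
move=> /orP[yx|/andP[/eqP-> ts]] /orP[xz|/andP[/eqP<- su]].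
- by rewrite (ltn_trans yx xz).
- by rewrite yx.
- by rewrite xz.
- by rewrite eqxx (IH _ _ ts su) orbT.
Qed.

Lemma lex_total : total lex_le.
Proof.
elim=> [|x s IH] [|y t] //=.
case: (ltngtP x y) => //= H; rewrite ?H ?eqxx ?orbT //= ?ltnn //=.
Qed.

Lemma sort_perm_exists (T : Type) (l : nat) (r : rel T) (f : 'I_l -> T) :
  reflexive r -> transitive r -> total r ->
  exists s : 'S_l, forall i j : 'I_l, (i <= j)%N -> r (f (s i)) (f (s j)).
Proof.
move=> rr rt rT.
pose rr' := (fun i j : 'I_l => r (f i) (f j)).
have rr'r : reflexive rr' by move=> i; apply: rr.
have rr't : transitive rr' by move=> i j k; apply: rt.
have rr'T : total rr' by move=> i j; apply: rT.
pose ss := sort rr' (enum 'I_l).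
have Hsz : size ss = l by rewrite size_sort size_enum_ord.
have Hu : uniq ss by rewrite (perm_uniq (permEl (perm_sort _ _))) enum_uniq.
pose g := fun i : 'I_l => nth i ss i.
have ginj : injective g.
  move=> i j; rewrite /g (set_nth_default i j); last by rewrite Hsz.
  move/eqP; rewrite nth_uniq ?Hsz //; first by move/eqP/val_inj.
exists (perm ginj) => i j ij; rewrite !permE /g.
rewrite (set_nth_default i j); last by rewrite Hsz.
apply: (sorted_leq_nth rr't rr'r) => //; first exact: sort_sorted.
- by rewrite inE Hsz.
- by rewrite inE Hsz.
Qed.
Local Open Scope ring_scope.

Definition liftf (p q : nat) (t : 'S_q) (j : 'I_(p + q)%N) : 'I_(p + q)%N :=
  match split j with inl a => lshift q a | inr b => rshift p (t b) end.

Lemma liftf_inj (p q : nat) (t : 'S_q) : injective (@liftf p q t).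
Proof.
move=> i j; rewrite /liftf -{2}(splitK i) -{2}(splitK j).
case: (split i) => [a|b]; case: (split j) => [c|d] /= E.
- by rewrite E.
- by move: (congr1 (@split p q) E); rewrite -[lshift _ _]/(unsplit (inl _)) -[rshift _ _]/(unsplit (inr _)) !unsplitK.
- by move: (congr1 (@split p q) E); rewrite -[lshift _ _]/(unsplit (inl _)) -[rshift _ _]/(unsplit (inr _)) !unsplitK.
- move: (congr1 (@split p q) E); rewrite -[rshift _ (t b)]/(unsplit (inr _)) -[rshift _ (t d)]/(unsplit (inr _)) !unsplitK.
  by case=> /perm_inj ->.
Qed.

Definition liftp (p q : nat) (t : 'S_q) : 'S_(p + q)%N := perm (@liftf_inj p q t).

Lemma col_perm_row_mx R m p q (t : 'S_q) (X : 'M[R]_(m, p)) (Y : 'M[R]_(m, q)) :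
  col_perm (@liftp p q t) (row_mx X Y) = row_mx X (col_perm t Y).
Proof.
apply/matrixP => i j; rewrite mxE permE /liftf -{1 2}(splitK j).
case: (split j) => [a|b] /=.
- by rewrite -[lshift _ _]/(unsplit (inl _)) unsplitK !row_mxEl.
- by rewrite -[rshift _ _]/(unsplit (inr _)) unsplitK !row_mxEr mxE.
Qed.

Lemma col_perm_col_mx R m1 m2 n (s : 'S_n) (U : 'M[R]_(m1, n)) (L : 'M[R]_(m2, n)) :
  col_perm s (col_mx U L) = col_mx (col_perm s U) (col_perm s L).
Proof.
apply/matrixP => i j; rewrite mxE -(splitK i).
case: (split i) => [a|b] /=.
- by rewrite !col_mxEu mxE.
- by rewrite !col_mxEd mxE.
Qed.

Lemma col_perm_scale (R : pzRingType) m n (s : 'S_n) (a : R) (M : 'M[R]_(m, n)) :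
  col_perm s (a *: M) = a *: col_perm s M.
Proof. by apply/matrixP => i j; rewrite !mxE. Qed.

Lemma code_col_perm m N (s : 'S_N) (G : 'M[Z4]_(m, N)) :
  code (col_perm s G) =
  [set (\row_j ((-1) ^+ false * x ord0 (s j)) : 'rV[Z4]_N) | x : 'rV[Z4]_N in code G].
Proof.
have E : forall x : 'rV[Z4]_N, (\row_j ((-1) ^+ false * x ord0 (s j)) : 'rV[Z4]_N) = col_perm s x.
  by move=> x; apply/matrixP => i j; rewrite !mxE expr0 mul1r (ord1 i).
have M : forall v : 'rV[Z4]_m, v *m col_perm s G = col_perm s (v *m G).
  by move=> v; rewrite !col_permE mulmxA.
apply/setP => x; rewrite inE; apply/existsP/imsetP.
- case=> v /eqP ->; exists (v *m G); first by rewrite inE; apply/existsP; exists v.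
  by rewrite E M.
- case=> y; rewrite inE => /existsP [v /eqP ->] ->.
  by exists v; rewrite E M.
Qed.

Lemma col_seq_perm m n (s : 'S_n) (M : 'M[Z4]_(m, n)) j :
  col_seq (col_perm s M) j = col_seq M (s j).
Proof. by rewrite /col_seq; apply: eq_map => x; rewrite mxE. Qed.

Lemma inB_perm m n (s : 'S_n) (B : 'M[Z4]_(m, n)) : inB B -> inB (col_perm s B).
Proof.
case=> [H|[i [[j Hj] [H1 H2]]]]; [left|right].
- by move=> i j; rewrite mxE.
- exists i; split; first by exists (s^-1 j)%g; rewrite mxE permKV.
  split; first by move=> i' Hi j'; rewrite mxE; apply: H1.
  by move=> j'; rewrite mxE.
Qed.

Theorem mainTheorem11 (n k1 k2 : nat) (Hn : (k1 + k2 <= n)%N)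
  (A : 'M[Z4]_(k1, k2)) (B : 'M[Z4]_(k1, n - k1 - k2))
  (D : 'M[Z4]_(k2, n - k1 - k2)) :
  inU A B D ->
  exists (A' : 'M[Z4]_(k1, k2)) (B' : 'M[Z4]_(k1, n - k1 - k2))
         (D' : 'M[Z4]_(k2, n - k1 - k2)),
    inV A' B' D' /\ equiv_codes (code (Gmat A B D)) (code (Gmat A' B' D')).
Proof.
case=> HA HD HAs HB.
have [sg Hsg] := sort_perm_exists (col_seq (col_mx B (2 *: D))) lex_refl lex_trans lex_total.
exists A, (col_perm sg B), (col_perm sg D); split.
- split; first split => //.
  + by move=> i j; rewrite mxE; apply: HD.
  + exact: inB_perm.
  + rewrite -col_perm_scale -col_perm_col_mx => i j ij.
    by rewrite !col_seq_perm; apply: Hsg.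
- exists (liftp k1 (liftp k2 sg)), (fun _ => false).
  have -> : Gmat A (col_perm sg B) (col_perm sg D) = col_perm (liftp k1 (liftp k2 sg)) (Gmat A B D).
    by rewrite /Gmat col_perm_col_mx !col_perm_row_mx col_perm_scale.
  exact: code_col_perm.
Qed.
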